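(* Let $Y$ be an infinite-dimensional real Banach space. Then $\mathrm{A}(X,Y)\subsetneq\mathrm{Lip}_0(X,Y)$ for every nontrivial real Banach space $X$.
   Context: $\widetilde X=\{(x,y)\in X^2:x\neq y\}$. $\mathrm{Lip}_0(X,Y)$ is the Banach space of Lipschitz $f\colon X\to Y$ with $f(0)=0$ and norm $\|f\|=\sup_{(x,y)\in\widetilde X}\|f(x)-f(y)\|/\|x-y\|$. $\mathrm{A}(X,Y)$ is the set of $f\in\mathrm{Lip}_0(X,Y)$ for which there are $z\in Y$ with $\|z\|=\|f\|$ and $(x_n,y_n)\in\widetilde X$ with $\frac{f(x_n)-f(y_n)}{\|x_n-y_n\|}\to z$. *)

(* Defs.v *)
From HB Require Import structures.
From mathcomp Require Import all_boot all_order all_algebra.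
From mathcomp Require Import all_classical all_reals all_analysis.
Unset Printing Implicit Defensive.
Import Order.TTheory GRing.Theory Num.Theory.
Import numFieldNormedType.Exports.
Local Open Scope classical_set_scope.
Local Open Scope ring_scope.

Definition finite_dim (R : realType) (Y : normedModType R) : Prop :=
  exists (n : nat) (e : 'I_n -> Y),
    forall y : Y, exists c : 'I_n -> R, y = \sum_(i < n) c i *: e i.

Definition infinite_dim (R : realType) (Y : normedModType R) : Prop :=
  ~ @finite_dim R Y.

Definition Lip0 (R : realType) (X Y : normedModType R) : set (X -> Y) :=
  [set f | f 0 = 0 /\
     exists L : R, forall x y : X, `|f x - f y| <= L * `|x - y| ].

Definition lipnorm (R : realType) (X Y : normedModType R) (f : X -> Y) : R :=
  sup [set r | exists x y : X, x != y /\ r = `|f x - f y| / `|x - y| ].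

Definition Aset (R : realType) (X Y : normedModType R) : set (X -> Y) :=
  [set f | @Lip0 R X Y f /\
     exists z : Y, `|z| = @lipnorm R X Y f /\
       exists (x y : nat -> X), (forall n, x n != y n) /\
         (fun n => `|x n - y n|^-1 *: (f (x n) - f (y n))) @ \oo --> z ].

(* Main.v *)
Require Import Defs.
From HB Require Import structures.
From mathcomp Require Import all_boot all_order all_algebra.
From mathcomp Require Import all_classical all_reals all_analysis.
Import Order.TTheory GRing.Theory Num.Theory.
Import numFieldNormedType.Exports.
Local Open Scope classical_set_scope.
Local Open Scope ring_scope.
From mathcomp Require Import lra.

Section Span.
Context {R : realType} {Y : normedModType R}.

Definition span (n : nat) (w : nat -> Y) : set Y :=
  [set y | exists c : nat -> R, y = \sum_(i < n) c i *: w i].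

Lemma span0 n w : span n w 0.
Proof. exists (fun=> 0); by rewrite big1 // => i _; rewrite scale0r. Qed.

Lemma spanDZ n w y1 y2 r : span n w y1 -> span n w y2 -> span n w (y1 + r *: y2).
Proof.
move=> [c1 ->] [c2 ->]; exists (fun i => c1 i + r * c2 i).
rewrite scaler_sumr -big_split /=; apply: eq_bigr => i _.
by rewrite scalerDl scalerA.
Qed.

Lemma spanZ n w y r : span n w y -> span n w (r *: y).
Proof. move=> h; have := @spanDZ n w 0 y r (span0 n w) h; by rewrite add0r. Qed.

Lemma spanB n w y1 y2 : span n w y1 -> span n w y2 -> span n w (y1 - y2).
Proof. move=> h1 h2; have := @spanDZ n w y1 y2 (-1) h1 h2; by rewrite scaleN1r. Qed.

Lemma spanS n w y : span n.+1 w y <-> exists a u, span n w u /\ y = u + a *: w n.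
Proof.
split.
- move=> [c ->]; exists (c n), (\sum_(i < n) c i *: w i); split; first by exists c.
  by rewrite big_ord_recr.
- move=> [a [u [[c ->] ->]]]; exists (fun i => if i == n then a else c i).
  rewrite big_ord_recr /= eqxx; congr (_ + _); apply: eq_bigr => i _.
  by rewrite (ltn_eqF (ltn_ord i)).
Qed.

Lemma span_mono n m w : (n <= m)%N -> span n w `<=` span m w.
Proof.
elim: m => [|m IH]; first by rewrite leqn0 => /eqP ->.
rewrite leq_eqVlt => /orP [/eqP -> //| lt] y /(IH lt) h.
apply/spanS; exists 0, y; split => //; by rewrite scale0r addr0.
Qed.

Lemma span_vec j k w : (j < k)%N -> span k w (w j).
Proof.
move=> lt; apply: (@span_mono j.+1 k w lt); apply/spanS; exists (GRing.one R), 0; split; first exact: span0.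
by rewrite add0r; apply/esym; apply: scale1r.
Qed.

Lemma span_ext n w1 w2 : (forall i, (i < n)%N -> w1 i = w2 i) -> span n w1 = span n w2.
Proof.
move=> E; apply/seteqP; split => y [c ->]; exists c; apply: eq_bigr => i _;
  by rewrite E.
Qed.

Lemma sepline n w a u : (forall v, span n w v -> 2^-1 <= `|w n - v|) ->
  span n w u -> `|a| / 2 <= `|u + a *: w n|.
Proof.
move=> H su; have [->|a0] := eqVneq a 0; first by rewrite normr0 mul0r normr_ge0.
have -> : u + a *: w n = a *: (w n - (- a^-1) *: u).
  by rewrite scalerDr scalerN scalerA mulrN mulfV // scaleN1r opprK addrC.
rewrite normrZ; have := H _ (@spanZ n w u (- a^-1) su).
have := normr_ge0 a; move: (`|a|) (`|_ - _|) => A B; nra.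
Qed.

Lemma small_inv (d : R) : 0 < d -> exists m : nat, (m.+1%:R)^-1 < d.
Proof.
move=> d0; exists (Num.truncn d^-1).
have h : d^-1 < (Num.truncn d^-1).+1%:R by rewrite -truncn_le_nat.
rewrite -[X in _ < X]invrK ltf_pV2 ?posrE ?invr_gt0 ?ltr0n //.
Qed.

End Span.

Section Riesz.
Context {R : realType} {Y : normedModType R}.

Lemma id1 (y u w : Y) (a b : R) : y - b *: w - u = (y - (u + a *: w)) + (a - b) *: w.
Proof. by rewrite scalerBl opprD !addrA subrK addrAC. Qed.
Lemma id2 (y um up w : Y) (am ap : R) :
 (um - up) + (am - ap) *: w = (y - (up + ap *: w)) - (y - (um + am *: w)).
Proof. by rewrite [in RHS]opprB [in RHS]addrC [in RHS]addrA subrK scalerBl opprD addrACA. Qed.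

Definition goodk (w : nat -> Y) (k : nat) :=
  `|w k| = 1 /\ forall u, span k w u -> 2^-1 <= `|w k - u|.

Lemma span_sep n w : (forall k, (k < n)%N -> goodk w k) ->
  forall y, ~ span n w y -> exists2 d, 0 < d & forall u, span n w u -> d <= `|y - u|.
Proof.
elim: n w => [|n IH] w Hw y Hy.
  exists `|y|.
    rewrite normr_gt0; apply/eqP => y0; apply: Hy; rewrite y0; exact: span0.
  move=> u [c ->]; by rewrite big_ord0 subr0.
have IH' := IH w (fun k lt => Hw k (leqW lt)).
have [wn1 Hwn] := Hw n (ltnSn n).
apply: contrapT => Hno; apply: Hy.
have H' : forall m : nat, exists au : R * Y, span n w au.2 /\
    `|y - (au.2 + au.1 *: w n)| < (m.+1%:R)^-1.
  move=> m; apply: contrapT => Hm; apply: Hno; exists (m.+1%:R)^-1.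
    by rewrite invr_gt0 ltr0n.
  move=> u /spanS [a [v [sv ->]]]; rewrite leNgt; apply/negP => lt; apply: Hm.
  by exists (a, v).
have [g Hg] := choice H'.
pose a m := (g m).1. pose e (m : nat) : R := (m.+1%:R)^-1.
have e0 m : 0 < e m by rewrite invr_gt0 ltr0n.
have Hab m p : `|a m - a p| <= 2 * (e m + e p).
  have := @sepline _ _ n w (a m - a p) _ Hwn (@spanB _ _ n w _ _ (Hg m).1 (Hg p).1).
  rewrite (id2 y) => h.
  have := ler_normB (y - ((g p).2 + a p *: w n)) (y - ((g m).2 + a m *: w n)).
  have := (Hg m).2; have := (Hg p).2; rewrite -/(a m) -/(a p) -/(e m) -/(e p).
  move: (`|_ - _|) h => A h1 h2 h3 h4.
  lra.
pose S := [set x | exists m, x = a m - 2 * e m].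
have hS : has_sup S.
  split; first by exists (a 0%N - 2 * e 0%N); exists 0%N.
  exists (a 0%N + 2 * e 0%N) => x [m ->].
  have := Hab m 0%N; rewrite ler_norml => /andP [h1 h2].
  have := e0 m; have := e0 0%N; lra.
pose as_ := sup S.
have Has m : `|a m - as_| <= 2 * e m.
  have h1 : a m - 2 * e m <= as_ by apply: sup_upper_bound => //; exists m.
  have h2 : as_ <= a m + 2 * e m.
    apply: ge_sup; first by exists (a m - 2 * e m); exists m.
    move=> x [p ->]; have := Hab p m; rewrite ler_norml => /andP [h3 h4].
    have := e0 p; lra.
  rewrite ler_norml; apply/andP; split; lra.
case: (pselect (span n w (y - as_ *: w n))) => [sp|nsp].
  apply/spanS; exists as_, (y - as_ *: w n); split => //; by rewrite subrK.
have [d d0 Hd] := IH' _ nsp.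
have [m Hm] : exists m : nat, (m.+1%:R)^-1 < d / 3 by apply: small_inv; lra.
have := Hd _ (Hg m).1.
rewrite (id1 _ _ _ (a m)).
have := ler_normD (y - ((g m).2 + a m *: w n)) ((a m - as_) *: w n).
rewrite normrZ wn1 mulr1.
have := (Hg m).2; have := Has m; rewrite -/(a m) -/(e m).
have : e m < d / 3 by [].
move: (`|_ - _|) (`|_ + _|) => A B.
lra.
Qed.

Lemma riesz n w : (forall k, (k < n)%N -> goodk w k) -> ~ @finite_dim R Y ->
  exists v, `|v| = 1 /\ forall u, span n w u -> 2^-1 <= `|v - u|.
Proof.
move=> Hw hY.
have [y Hy] : exists y, ~ span n w y.
  apply: contrapT => H; apply: hY; exists n, (fun i => w i) => y.
  have : span n w y by apply: contrapT => h; apply: H; exists y.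
  by move=> [c ->]; exists (fun i => c i).
have [d d0 Hd] := @span_sep n w Hw y Hy.
pose L := [set r | forall u, span n w u -> r <= `|y - u|].
have hL : has_sup L.
  split; first by exists d.
  exists `|y| => r Hr; have := Hr 0 (span0 n w); by rewrite subr0.
pose D := sup L.
have dD : d <= D by apply: sup_upper_bound.
have HD u : span n w u -> D <= `|y - u|.
  move=> su; apply: ge_sup; first by exists d.
  by move=> r Hr; apply: Hr.
have [v0 [sv0 Hv0]] : exists v0, span n w v0 /\ `|y - v0| < 2 * D.
  apply: contrapT => H.
  have : 2 * D <= D.
    apply: sup_upper_bound => // u su; rewrite leNgt; apply/negP => lt; apply: H.
    by exists u.
  lra.
pose r := `|y - v0|.
have rD : D <= r by apply: HD.
have r0 : 0 < r by lra.
exists (r^-1 *: (y - v0)); split.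
  by rewrite normrZ normfV gtr0_norm // mulVf // gt_eqF.
move=> u su.
have -> : r^-1 *: (y - v0) - u = r^-1 *: (y - (v0 + r *: u)).
  by rewrite [in RHS]opprD [in RHS]addrA [in RHS]scalerBr scalerA mulVf ?gt_eqF // scale1r.
rewrite normrZ normfV gtr0_norm //.
have := HD _ (@spanDZ _ _ n w _ _ r sv0 su).
move: (`|_ - _|) => N hN.
have ri : r^-1 * r = 1 by rewrite mulVf // gt_eqF.
have : 0 < r^-1 by rewrite invr_gt0.
have : r / 2 < N by rewrite -/r in Hv0; lra.
move: (r^-1) ri => ir ri h1 h2.
nra.
Qed.

End Riesz.

Section Seq.
Context {R : realType} {Y : normedModType R}.

Definition goodv (w : nat -> Y) n (v : Y) :=
  `|v| = 1 /\ forall u, span n w u -> 2^-1 <= `|v - u|.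
Definition nxt n (w : nat -> Y) : Y := xget 0 (goodv w n).
Fixpoint W (n : nat) : nat -> Y :=
  if n is m.+1 then (fun k => if k == m then nxt m (W m) else W m k) else (fun=> 0).
Definition ws k := W k.+1 k.

Lemma wsE k : ws k = nxt k (W k). Proof. by rewrite /ws /= eqxx. Qed.

Lemma W_stable n k : (k < n)%N -> W n k = ws k.
Proof.
elim: n => // n IH; rewrite ltnS leq_eqVlt => /orP [/eqP -> //| lt] /=.
by rewrite (ltn_eqF lt) IH.
Qed.

Lemma ws_good : ~ @finite_dim R Y -> forall k, goodk ws k.
Proof.
move=> hY.
suff H : forall n k, (k < n)%N -> goodk ws k by move=> k; exact: (H k.+1 k).
elim=> // n IH k; rewrite ltnS leq_eqVlt => /orP [/eqP -> | lt]; last exact: IH.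
have Hsp : forall j, (j <= n)%N -> span j (W n) = span j ws.
  move=> j lj; apply: span_ext => i li; apply: W_stable; exact: leq_trans li lj.
have HW : forall j, (j < n)%N -> goodk (W n) j.
  move=> j lj; rewrite /goodk (@W_stable n j lj) (Hsp j (ltnW lj)); exact: IH.
have := xgetPex 0 (@riesz _ _ n (W n) HW hY).
move=> H; rewrite /goodk wsE -(Hsp n (leqnn n)); exact: H.
Qed.

Lemma ws_sep1 (hY : ~ @finite_dim R Y) j k (a b : R) : (j < k)%N -> a != 0 ->
  `|a| / 2 <= `|a *: ws k - b *: ws j|.
Proof.
move=> lt a0.
have -> : a *: ws k - b *: ws j = a *: (ws k - (a^-1 * b) *: ws j).
  by rewrite scalerBr scalerA mulrA mulfV // mul1r.
rewrite normrZ; have [_ H] := ws_good hY k.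
have := H _ (@spanZ _ _ k ws _ (a^-1 * b) (@span_vec _ _ j k ws lt)).
have := normr_ge0 a; move: (`|a|) (`|_ - _|) => A B; nra.
Qed.

Lemma ws_sep (hY : ~ @finite_dim R Y) j k (a b : R) : j != k ->
  7/8 <= `|a| -> 7/8 <= `|b| -> 7/16 <= `|a *: ws k - b *: ws j|.
Proof.
move=> jk ha hb.
have a0 : a != 0 by apply/eqP => a0; move: ha; rewrite a0 normr0; lra.
have b0 : b != 0 by apply/eqP => b0; move: hb; rewrite b0 normr0; lra.
case: (ltngtP j k) => [lt|lt|e]; last by rewrite e eqxx in jk.
- have := @ws_sep1 hY j k a b lt a0; lra.
- rewrite distrC; have := @ws_sep1 hY k j b a lt b0; lra.
Qed.

End Seq.

Section Tent.
Context {R : realType}.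
Definition tent (r : R) : R :=
  if r <= 0 then 0 else if r <= 4^-1 then r else if r <= 2^-1 then 2^-1 - r else 0.

Lemma tent_spec r : (r <= 0 /\ tent r = 0) \/ (0 <= r /\ r <= 4^-1 /\ tent r = r) \/
  (4^-1 <= r /\ r <= 2^-1 /\ tent r = 2^-1 - r) \/ (2^-1 <= r /\ tent r = 0).
Proof.
rewrite /tent; case: (lerP r 0) => h1; first by left.
case: (lerP r 4^-1) => h2; first by right; left; split => //; lra.
case: (lerP r 2^-1) => h3; first by right; right; left; split => //; lra.
by right; right; right; split => //; lra.
Qed.

Lemma tent_ge0 r : 0 <= tent r.
Proof. by case: (tent_spec r) => [[? ->]|[[? [? ->]]|[[? [? ->]]|[? ->]]]]; lra. Qed.
Lemma tent_le4 r : tent r <= 4^-1.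
Proof. by case: (tent_spec r) => [[? ->]|[[? [? ->]]|[[? [? ->]]|[? ->]]]]; lra. Qed.
Lemma tent_le_r r : 0 <= r -> tent r <= r.
Proof. by case: (tent_spec r) => [[? ->]|[[? [? ->]]|[[? [? ->]]|[? ->]]]]; lra. Qed.
Lemma tent_le_h r : r <= 2^-1 -> tent r <= 2^-1 - r.
Proof. by case: (tent_spec r) => [[? ->]|[[? [? ->]]|[[? [? ->]]|[? ->]]]]; lra. Qed.
Lemma tent_0h r : 2^-1 <= r -> tent r = 0.
Proof.
case: (tent_spec r) => [[? ->]|[[? [? ->]]|[[? [? ->]]|[? ->]]]] // h; lra.
Qed.
Lemma tent_lip r s : `|tent r - tent s| <= `|r - s|.
Proof.
have [h|h] := lerP s r.
  rewrite ler_norml; apply/andP; split;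
  case: (tent_spec r) => [[? ->]|[[? [? ->]]|[[? [? ->]]|[? ->]]]];
  case: (tent_spec s) => [[? ->]|[[? [? ->]]|[[? [? ->]]|[? ->]]]]; lra.
rewrite ler_norml; apply/andP; split;
case: (tent_spec r) => [[? ->]|[[? [? ->]]|[[? [? ->]]|[? ->]]]];
case: (tent_spec s) => [[? ->]|[[? [? ->]]|[[? [? ->]]|[? ->]]]]; lra.
Qed.
Lemma tent0 : tent 0 = 0.
Proof. by rewrite /tent lexx. Qed.
Lemma tent4 : tent 4^-1 = 4^-1.
Proof. by case: (tent_spec 4^-1) => [[? ->]|[[? [? ->]]|[[? [? ->]]|[? ->]]]] //; lra. Qed.
End Tent.

Section Fun.
Context {R : realType} {X Y : normedModType R} (w : nat -> Y).
Hypothesis w1 : forall k, `|w k| = 1.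

Definition cc (k : nat) : R := 1 - (k.+1%:R)^-1.
Lemma cc_ge0 k : 0 <= cc k.
Proof. by rewrite /cc subr_ge0 invf_le1 ?ler1n ?ltr0n. Qed.
Lemma cc_lt1 k : cc k < 1.
Proof. by rewrite /cc ltrBlDr ltrDl invr_gt0 ltr0n. Qed.

Definition gg (t : R) : Y :=
  (cc (Num.truncn t) * tent (t - (Num.truncn t)%:R)) *: w (Num.truncn t).

Lemma gg_norm t : `|gg t| = cc (Num.truncn t) * tent (t - (Num.truncn t)%:R).
Proof.
by rewrite /gg normrZ w1 mulr1 normrM (ger0_norm (cc_ge0 _)) (ger0_norm (tent_ge0 _)).
Qed.

Lemma g_class_le s t : 0 <= s -> s <= t ->
  `|gg s - gg t| <= (t - s) / 2 \/
  exists k b, `|b| <= cc k * (t - s) /\ gg s - gg t = b *: w k.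
Proof.
move=> s0 st.
have t0 : 0 <= t by lra.
have := trunc_itv s0; have := trunc_itv t0; rewrite -!natr1.
rewrite /gg.
set a := Num.truncn s; set b := Num.truncn t => /andP [hb1 hb2] /andP [ha1 ha2].
have ab : (a <= b)%N.
  rewrite leqNgt; apply/negP => lt.
  have : (b.+1%:R : R) <= a%:R by rewrite ler_nat.
  rewrite -natr1; lra.
have ca := cc_ge0 a; have cb := cc_ge0 b; have ca1 := cc_lt1 a; have cb1 := cc_lt1 b.
case: (ltngtP a b) => [lt|gt|eq]; last first.
- right; exists a, (cc a * (tent (s - a%:R) - tent (t - a%:R))); split.
    rewrite normrM (ger0_norm ca); apply: ler_wpM2l => //.
    have := tent_lip (s - a%:R) (t - a%:R).
    have -> : s - a%:R - (t - a%:R) = s - t by lra.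
    by move=> h; apply: (le_trans h); rewrite distrC ger0_norm ?subr_ge0.
  by rewrite -eq -scalerBl mulrBr.
- by move: gt; rewrite ltnNge ab.
have hab : (a%:R : R) + 1 <= b%:R by rewrite natr1 ler_nat.
have tsa := tent_ge0 (s - a%:R); have tsb := tent_ge0 (t - b%:R).
have := tent_le4 (s - a%:R); have := tent_le4 (t - b%:R).
case: (lerP 2^-1 (s - a%:R)) => h1.
  rewrite (@tent_0h _ _ h1) mulr0 scale0r add0r; right.
  exists b, (- (cc b * tent (t - b%:R))); split; last by rewrite scaleNr.
  rewrite normrN normrM (ger0_norm cb) (ger0_norm tsb); apply: ler_wpM2l => //.
  have : tent (t - b%:R) <= t - b%:R by apply: tent_le_r; lra.
  lra.
case: (lerP 2^-1 (t - b%:R)) => h2.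
  rewrite (@tent_0h _ _ h2) mulr0 scale0r subr0; right.
  exists a, (cc a * tent (s - a%:R)); split => //.
  rewrite normrM (ger0_norm ca) (ger0_norm tsa); apply: ler_wpM2l => //.
  have : tent (s - a%:R) <= 2^-1 - (s - a%:R) by apply: tent_le_h; lra.
  lra.
move=> q1 q2; left.
have key : cc a * tent (s - a%:R) + cc b * tent (t - b%:R) <= (t - s) / 2.
  have : tent (s - a%:R) <= 2^-1 - (s - a%:R) by apply: tent_le_h; lra.
  have : tent (t - b%:R) <= t - b%:R by apply: tent_le_r; lra.
  have := ler_piMl tsa (ltW ca1); have := ler_piMl tsb (ltW cb1).
  lra.
apply: (le_trans (ler_normB _ _)).
rewrite !normrZ !w1 !mulr1 (ger0_norm ca) (ger0_norm cb) (ger0_norm tsa) (ger0_norm tsb).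
have -> : (0 + 1 + 1 : R) = 2 by rewrite add0r.
exact: key.
Qed.


Lemma g_class s t : 0 <= s -> 0 <= t ->
  `|gg s - gg t| <= `|s - t| / 2 \/
  exists k b, `|b| <= cc k * `|s - t| /\ gg s - gg t = b *: w k.
Proof.
move=> s0 t0; case: (boolP (s <= t)) => st.
  have E : `|s - t| = t - s by rewrite distrC ger0_norm // subr_ge0.
  by rewrite E; apply: g_class_le.
have ts : t <= s by rewrite leNgt -leNgt; apply: ltW; rewrite ltNge.
have E : `|s - t| = s - t by rewrite ger0_norm // subr_ge0.
rewrite E; case: (@g_class_le t s t0 ts) => [h|[k [b [hb he]]]].
  by left; rewrite -opprB normrN.
by right; exists k, (- b); split; [rewrite normrN | rewrite -opprB he scaleNr].
Qed.

Definition ff (x : X) : Y := gg `|x|.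

Lemma ff0 : ff 0 = 0.
Proof.
have t0 : Num.truncn (0 : R) = 0%N by apply: trunc_def; rewrite /= lexx ltr01.
by rewrite /ff /gg normr0 t0 subr0 tent0 mulr0 scale0r.
Qed.

Lemma ff_lip x y : `|ff x - ff y| <= `|x - y|.
Proof.
have D := ler_dist_dist x y.
have D0 : 0 <= `| `|x| - `|y| | by [].
case: (@g_class _ _ (normr_ge0 x) (normr_ge0 y)) => [h|[k [b [hb ->]]]].
  apply: (le_trans h); lra.
rewrite normrZ w1 mulr1; apply: (le_trans hb).
have := cc_ge0 k; have := cc_lt1 k; move: (cc k) => C; nra.
Qed.

Lemma ff_class x y : x != y ->
  `| `|x - y|^-1 *: (ff x - ff y)| <= 2^-1 \/
  exists k b, `|b| <= cc k /\ `|x - y|^-1 *: (ff x - ff y) = b *: w k.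
Proof.
move=> xy.
have d0 : 0 < `|x - y| by rewrite normr_gt0 subr_eq0.
have D := ler_dist_dist x y.
have D0 : 0 <= `| `|x| - `|y| | by [].
have di : `|x - y|^-1 * `|x - y| = 1 by rewrite mulVf // gt_eqF.
have dpos : 0 < `|x - y|^-1 by rewrite invr_gt0.
case: (@g_class _ _ (normr_ge0 x) (normr_ge0 y)) => [h|[k [b [hb he]]]].
  left; rewrite normrZ normfV normr_id.
  move: h; rewrite /ff; move: (`|gg _ - _|) (`|x - y|^-1) di dpos => G I di dpos h.
  nra.
right; exists k, (`|x - y|^-1 * b); split; last by rewrite /ff he scalerA.
rewrite normrM normfV normr_id.
have c0 := cc_ge0 k.
have h2 : cc k * `| `|x| - `|y| | <= cc k * `|x - y| by apply: ler_wpM2l.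
have e : `|x - y|^-1 * (cc k * `|x - y|) = cc k by rewrite mulrCA di mulr1.
have h3 : `|x - y|^-1 * `|b| <= `|x - y|^-1 * (cc k * `|x - y|).
  apply: ler_wpM2l; [exact: ltW | exact: le_trans hb h2].
by rewrite e in h3.
Qed.

End Fun.

Definition Qs {R : realType} {X Y : normedModType R} (x y : nat -> X) (n : nat) : Y :=
  `|x n - y n|^-1 *: (ff (@ws R Y) (x n) - ff (@ws R Y) (y n)).

Lemma norm_lb {R : realType} {Y : normedModType R} {z q : Y} {e : R} :
  `|z| = 1 -> `|z - q| < e -> 1 - e < `|q|.
Proof.
move=> z1 h; have := ler_normD (z - q) q; rewrite subrK z1; lra.
Qed.

Lemma not_attain {R : realType} {X Y : normedModType R} (hY : ~ @finite_dim R Y)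
  (z : Y) (x y : nat -> X) : `|z| = 1 -> (forall n, x n != y n) ->
  Qs x y @ \oo --> z -> False.
Proof.
move=> z1 xy /cvgrPdist_lt cv.
have w1 k : `|@ws R Y k| = 1 by case: (ws_good hY k).
have e8 : (0 : R) < 8^-1 by rewrite invr_gt0.
have [N1 _ HN1] := cv _ e8.
have h1 : `|z - Qs x y N1| < 8^-1 by apply: HN1 => /=.
have := norm_lb z1 h1.
case: (@ff_class R X Y ws w1 _ _ (xy N1)) => [hl | [K [al [hal hQ]]]].
  by rewrite -/(Qs x y N1) in hl; lra.
rewrite -/(Qs x y N1) in hQ.
rewrite hQ normrZ w1 mulr1 => hal2.
have eK : 0 < (1 - @cc R K) / 2 by have := @cc_lt1 R K; lra.
have [N2 _ HN2] := cv _ eK.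
pose m := maxn N1 N2.
have h2 : `|z - Qs x y m| < 8^-1 by apply: HN1; rewrite /= leq_maxl.
have h3 : `|z - Qs x y m| < (1 - cc K) / 2 by apply: HN2; rewrite /= leq_maxr.
have := norm_lb z1 h2; have := norm_lb z1 h3.
case: (@ff_class R X Y ws w1 _ _ (xy m)) => [hl | [j [be [hbe hQm]]]].
  by rewrite -/(Qs x y m) in hl; lra.
rewrite -/(Qs x y m) in hQm.
rewrite hQm normrZ w1 mulr1 => hb1 hb2.
have jK : j != K.
  by apply/eqP => e; rewrite e in hbe; lra.
have sep : 7/16 <= `|al *: @ws R Y K - be *: @ws R Y j|.
  by apply: (@ws_sep R Y hY j K al be jK); lra.
have t1 := ler_distD z (Qs x y N1) (Qs x y m).
rewrite (distrC (Qs x y N1) z) in t1.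
have e : Qs x y N1 - Qs x y m = al *: @ws R Y K - be *: @ws R Y j by rewrite hQ hQm.
rewrite e in t1.
lra.
Qed.

Theorem proposition2p7 (R : realType) (Y : completeNormedModType R)
  (hY : @infinite_dim R Y) (X : completeNormedModType R)
  (hX : exists x : X, x != 0) :
  @Aset R X Y `<` @Lip0 R X Y.
Proof.
have w1 k : `|@ws R Y k| = 1 by case: (ws_good hY k).
have fL : @Lip0 R X Y (ff (@ws R Y)).
  split; first exact: ff0.
  by exists 1 => x y; rewrite mul1r; apply: (@ff_lip R X Y ws w1).
have [x0 x00] := hX.
pose u := `|x0|^-1 *: x0.
have u1 : `|u| = 1 by rewrite normrZV // unitfE normr_eq0.
have Sk k : exists x y : X, x != y /\
    @cc R k = `|ff (@ws R Y) x - ff (@ws R Y) y| / `|x - y|.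
  exists ((k%:R + 4^-1) *: u), (k%:R *: u).
  have hxy : (k%:R + 4^-1) *: u - k%:R *: u = 4^-1 *: u.
    by rewrite -scalerBl; congr (_ *: _); lra.
  have nxy : `|(k%:R + 4^-1) *: u - k%:R *: u| = 4^-1.
    by rewrite hxy normrZ u1 mulr1 ger0_norm // invr_ge0.
  split.
    by apply/eqP => e; move: nxy; rewrite e subrr normr0; lra.
  rewrite nxy /ff.
  have n1 : `|(k%:R + 4^-1) *: u| = k%:R + 4^-1.
    by rewrite normrZ u1 mulr1 ger0_norm // addr_ge0 ?ler0n ?invr_ge0.
  have n2 : `|k%:R *: u| = k%:R by rewrite normrZ u1 mulr1 ger0_norm.
  rewrite n1 n2 /gg.
  have t1 : Num.truncn (k%:R + 4^-1 : R) = k.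
    apply: trunc_def; rewrite -[k.+1%:R]natr1; have : (0 : R) < 4^-1 by rewrite invr_gt0.
    move=> h; apply/andP; split; lra.
  have t2 : Num.truncn (k%:R : R) = k.
    by apply: trunc_def; rewrite lexx ltr_nat ltnSn.
  rewrite t1 t2 subrr tent0 mulr0 scale0r subr0.
  have -> : k%:R + 4^-1 - k%:R = 4^-1 :> R by lra.
  rewrite tent4 normrZ w1 mulr1 ger0_norm ?mulfK //.
  by apply: mulr_ge0; [exact: cc_ge0 | rewrite invr_ge0].
have hL : @lipnorm R X Y (ff (@ws R Y)) = 1.
  rewrite /lipnorm; set S := [set r | _].
  have Sne : S !=set0 by have [x [y h]] := Sk 0%N; exists (@cc R 0%N); exists x, y.
  have Sub : ubound S 1.
    move=> r [x [y [xy ->]]]; have d0 : 0 < `|x - y| by rewrite normr_gt0 subr_eq0.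
    by rewrite ler_pdivrMr // mul1r; apply: (@ff_lip R X Y ws w1).
  have ccS k : @cc R k <= sup S.
    by apply: sup_upper_bound; [split => //; exists 1 | exact: Sk].
  apply/eqP; rewrite eq_le; apply/andP; split; first exact: ge_sup.
  rewrite leNgt; apply/negP => lt.
  have [m hm] : exists m : nat, (m.+1%:R)^-1 < 1 - sup S by apply: small_inv; lra.
  have := ccS m; rewrite /cc; move: hm; move: (m.+1%:R^-1) => i; lra.
split; first by move=> g [].
move=> H; have [_ [z [zn [x [y [xy cv]]]]]] := H _ fL.
rewrite hL in zn.
exact: (@not_attain R X Y hY z x y zn xy cv).
Qed.
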